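(* Let $d\ge1$, $k:=2^d-1$, and let $$X:=\{0\}\cup\Big\{\big(x_1,\dots,x_d,(4k)^{\sum_{i=1}^{d}2^{i-1}x_i}\big): x\in\{0,1\}^d\setminus\{0\}\Big\}\subseteq\mathbb{Z}^{d+1},$$ $P:=\operatorname{conv}(X)$, and $t:=\sum_{a\in X}a$. Then $P\cap\mathbb{Z}^{d+1}=X$, and whenever $t=\sum_{a\in X\setminus\{0\}}\mu_a a$ with all $\mu_a\in\mathbb{Z}_{\ge0}$, we have $\mu_a=1$ for every $a\in X\setminus\{0\}$. In particular every representation of $t$ as a nonnegative integer combination of integer points of $P$ uses all $2^d-1$ nonzero points of $X$ (each exactly once). *)

(* Defs.v *)
From HB Require Import structures.
From mathcomp Require Import all_boot all_order all_algebra.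
From mathcomp Require Import reals.
Set Implicit Arguments. Unset Strict Implicit. Unset Printing Implicit Defensive.
Import Order.TTheory GRing.Theory Num.Theory.
Local Open Scope ring_scope.

Definition kk (d : nat) : nat := (2 ^ d - 1)%N.

(* The point (x_1,...,x_d, (4k)^(sum_{i=1}^d 2^(i-1) x_i)) of Z^(d+1),
   0-indexed: coordinates 0..d-1 are x, coordinate d (= ord_max) is the power. *)
Definition pt (d : nat) (x : {ffun 'I_d -> bool}) : 'rV[int]_(d.+1) :=
  \row_(j < d.+1)
    match unlift ord_max j with
    | Some i => (x i : nat)%:Z
    | None => ((4 * kk d) ^ (\sum_(i < d) 2 ^ i * x i))%N%:Z
    end.

Definition Xnz (d : nat) : seq 'rV[int]_(d.+1) :=
  undup [seq pt x | x <- enum {ffun 'I_d -> bool} & x != [ffun=> false]].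

Definition Xs (d : nat) : seq 'rV[int]_(d.+1) := undup (0 :: Xnz d).

Definition tt_ (d : nat) : 'rV[int]_(d.+1) := \sum_(a <- Xs d) a.

Definition in_conv (R : realType) (n : nat) (S : seq 'rV[R]_n) (v : 'rV[R]_n) : Prop :=
  exists lam : 'I_(size S) -> R,
    (forall i, 0 <= lam i) /\ \sum_(i < size S) lam i = 1 /\
    v = \sum_(i < size S) lam i *: nth 0 S i.

Definition toR (R : realType) (n : nat) (y : 'rV[int]_n) : 'rV[R]_n :=
  map_mx (fun z : int => z%:~R) y.

(* Main.v *)
Require Import Defs.
From HB Require Import structures.
From mathcomp Require Import all_boot all_order all_algebra.
From mathcomp Require Import reals zify.
Import Order.TTheory GRing.Theory Num.Theory.

Lemma digits_nat (B N : nat) (C C' : nat -> nat) : 0 < B ->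
  (forall n, C n < B) -> (forall n, C' n < B) ->
  \sum_(n < N) C n * B ^ n = \sum_(n < N) C' n * B ^ n ->
  forall n, n < N -> C n = C' n.
Proof.
move=> B0; elim: N C C' => [|N IH] C C' HC HC' E n //.
move: E; rewrite !big_ord_recl /= !expn0 !muln1.
have fact : forall D : nat -> nat, \sum_(i < N) D (bump 0 i) * B ^ bump 0 i =
   B * \sum_(i < N) D i.+1 * B ^ i.
  move=> D; rewrite big_distrr /=; apply: eq_bigr => i _.
  by rewrite /bump /= add1n expnS mulnCA.
rewrite !fact => E.
have E0 : C 0 = C' 0.
  have := congr1 (modn^~ B) E.
  by rewrite !(addnC (C _)) !(addnC (C' _)) !(mulnC B) !modnMDl !modn_small.
rewrite E0 in E; move/addnI/eqP: E; rewrite eqn_pmul2l // => /eqP E.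
case: n => [|n] //= Hn.
exact: (IH (fun i => C i.+1) (fun i => C' i.+1)).
Qed.

Lemma digits_fin (T : finType) (e : T -> nat) (B : nat) (c c' : T -> nat) :
  injective e -> 0 < B -> (forall x, c x < B) -> (forall x, c' x < B) ->
  \sum_x c x * B ^ e x = \sum_x c' x * B ^ e x -> c =1 c'.
Proof.
move=> inje B0 Hc Hc' E.
set M := \max_x e x.
have eM x : e x <= M by exact: leq_bigmax.
have conv : forall D : T -> nat, \sum_x D x * B ^ e x =
   \sum_(n < M.+1) (\sum_(x | e x == n) D x) * B ^ n.
  move=> D; rewrite (partition_big (fun x => inord (e x) : 'I_M.+1) xpredT) //=.
  apply: eq_bigr => n _; rewrite big_distrl /=.
  apply: eq_big => x.
    by rewrite -val_eqE /= inordK // ltnS eM.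
  by move=> /eqP <-; rewrite inordK // ltnS eM.
have bnd : forall D : T -> nat, (forall x, D x < B) -> forall n,
   \sum_(x | e x == n) D x < B.
  move=> D HD n; case: (pickP (fun x => e x == n)) => [x0 Hx0|H0].
    rewrite (big_pred1 x0) // => x /=; apply/idP/idP => [/eqP Ex|/eqP ->//].
    by apply/eqP/inje; rewrite Ex (eqP Hx0).
  by rewrite big_pred0.
rewrite !conv in E.
move=> x; have := @digits_nat B M.+1 _ _ B0 (bnd _ Hc) (bnd _ Hc') E (e x) (eM x).
have P1 : forall D : T -> nat, \sum_(y | e y == e x) D y = D x.
  by move=> D; rewrite (big_pred1 x) // => y /=; apply/idP/idP => [/eqP/inje->|/eqP->].
by rewrite !P1.
Qed.

Local Open Scope ring_scope.

Definition ex {d} (x : {ffun 'I_d -> bool}) : nat := (\sum_(i < d) 2 ^ i * x i)%N.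

Lemma pt_lift d (x : {ffun 'I_d -> bool}) i : pt x 0 (lift ord_max i) = (x i : nat)%:Z.
Proof. by rewrite /pt mxE liftK. Qed.

Lemma pt_max d (x : {ffun 'I_d -> bool}) : pt x 0 ord_max = ((4 * kk d) ^ ex x)%N%:Z.
Proof. by rewrite /pt mxE unlift_none. Qed.

Lemma ffun_nz d (x : {ffun 'I_d -> bool}) : x != [ffun=> false] -> exists i, x i.
Proof.
move=> Hx; apply/existsP; apply: contraR Hx => /existsPn H.
by apply/eqP/ffunP => i; rewrite ffunE; exact/negbTE/H.
Qed.

Lemma pt_inj d : injective (@pt d).
Proof.
move=> x y E; apply/ffunP => i.
have := congr1 (fun M : 'rV[int]_d.+1 => M 0 (lift ord_max i)) E; rewrite /= !pt_lift.
by case: (x i); case: (y i).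
Qed.

Lemma mem_Xnz d a : a \in Xnz d -> exists2 x, x != [ffun=> false] & a = pt x.
Proof.
rewrite mem_undup => /mapP [x]; rewrite mem_filter => /andP[Hx _] ->.
by exists x.
Qed.

Lemma mem_Xs d a : a \in Xs d -> a = 0 \/ a \in Xnz d.
Proof. by rewrite mem_undup in_cons => /orP[/eqP|]; auto. Qed.

Lemma Xs_coord d a i : a \in Xs d ->
  a 0 (lift ord_max i) = 0 \/ a 0 (lift ord_max i) = 1.
Proof.
case/mem_Xs => [->|/mem_Xnz [x _ ->]]; first by left; rewrite mxE.
by rewrite pt_lift; case: (x i); auto.
Qed.

Lemma Xs_inj d a b : a \in Xs d -> b \in Xs d ->
  (forall i, a 0 (lift ord_max i) = b 0 (lift ord_max i)) -> a = b.
Proof.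
have nz : forall x : {ffun 'I_d -> bool}, x != [ffun=> false] ->
   ~ (forall i, pt x 0 (lift ord_max i) = (0 : 'rV[int]_d.+1) 0 (lift ord_max i)).
  move=> x /ffun_nz [i Hi] H; have := H i; by rewrite pt_lift mxE Hi.
case/mem_Xs => [->|/mem_Xnz [x Hx ->]]; case/mem_Xs => [->|/mem_Xnz [y Hy ->]] //.
- by move=> H; exfalso; apply: (nz y Hy) => i; rewrite H.
- by move=> H; exfalso; apply: (nz x Hx).
move=> H; congr pt; apply/ffunP => i; have := H i; rewrite !pt_lift.
by case: (x i); case: (y i).
Qed.

Lemma Xnz_eq d : Xnz d = [seq pt x | x <- enum {ffun 'I_d -> bool} & x != [ffun=> false]].
Proof.
rewrite /Xnz undup_id // (map_inj_uniq (@pt_inj d)) filter_uniq //; exact: enum_uniq.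
Qed.

Lemma two_le d : (1 <= d)%N -> (2 <= 2 ^ d)%N.
Proof. by move=> hd; rewrite -{1}(expn1 2) leq_exp2l. Qed.

Lemma zero_notin d : (1 <= d)%N -> 0 \notin Xnz d.
Proof.
move=> hd; apply/negP => /mem_Xnz [x _ /(congr1 (fun M : 'rV[int]_d.+1 => M 0 ord_max))].
rewrite pt_max mxE => -[] /eqP; rewrite eq_sym expn_eq0 /kk => /andP[/eqP H _].
have := @two_le d hd; lia.
Qed.

Lemma tt_eq d : (1 <= d)%N -> tt_ d = \sum_(a <- Xnz d) a.
Proof.
move=> hd; rewrite /tt_ /Xs /= (negbTE (@zero_notin d hd)).
by rewrite undup_id ?undup_uniq // big_cons add0r.
Qed.

Lemma sumz (T : finType) (P : pred T) (f : T -> nat) :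
  \sum_(x | P x) (f x)%:Z = (\sum_(x | P x) f x)%N%:Z.
Proof. by rewrite -natz natr_sum; apply: eq_bigr => x _; rewrite natz. Qed.

Lemma mulrnz (n m : nat) : n%:Z *+ m = (n * m)%N%:Z.
Proof. by rewrite -!natz natrM mulr_natr. Qed.

Lemma ex_inj d : injective (@ex d).
Proof.
move=> x y E; apply/ffunP => i.
have := @digits_fin _ (@nat_of_ord d) 2 (fun i => x i : nat) (fun i => y i : nat)
  (@ord_inj d) isT (fun i => leq_b1 _) (fun i => leq_b1 _).
have fl : forall z : {ffun 'I_d -> bool}, (\sum_(i < d) (z i : nat) * 2 ^ i)%N = ex z.
  by move=> z; apply: eq_bigr => j _; rewrite mulnC.
rewrite !fl E => /(_ erefl i).
by case: (x i); case: (y i).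
Qed.

Lemma part2 d (hd : (1 <= d)%N) (mu : 'rV[int]_(d.+1) -> nat) :
      tt_ d = \sum_(a <- Xnz d) a *+ mu a ->
      forall a, a \in Xnz d -> mu a = 1%N.
Proof.
move=> H; rewrite tt_eq // Xnz_eq !big_map !big_filter !big_enum_cond in H.
pose P (x : {ffun 'I_d -> bool}) := x != [ffun=> false].
have Hc : forall j, \sum_(x in {ffun 'I_d -> bool} | P x) pt x 0 j =
                    \sum_(x in {ffun 'I_d -> bool} | P x) pt x 0 j *+ mu (pt x).
  move=> j; have := congr1 (fun M : 'rV[int]_d.+1 => M 0 j) H.
  rewrite /= !summxE => ->; apply: eq_bigr => x _; by rewrite mulmxnE.
have bound : forall x0, P x0 -> (mu (pt x0) <= 2 ^ d)%N.
  move=> x0 Px0; have [i Hi] := @ffun_nz d x0 Px0.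
  have := Hc (lift ord_max i).
  under eq_bigr do rewrite pt_lift.
  under [in RHS]eq_bigr do rewrite pt_lift mulrnz.
  rewrite !sumz => -[] E.
  apply: (@leq_trans (\sum_(x in {ffun 'I_d -> bool} | P x) (x i * mu (pt x)))%N).
    by rewrite (bigD1 x0) //= Hi mul1n leq_addr.
  rewrite -E; apply: (@leq_trans (\sum_(x : {ffun 'I_d -> bool}) 1)%N).
    rewrite [X in (_ <= X)%N](bigID (fun x => (x \in {ffun 'I_d -> bool}) && P x)) /=.
    apply: leq_trans (leq_addr _ _); apply: leq_sum => x _; exact: leq_b1.
  by rewrite sum1_card card_ffun card_bool card_ord.
have := Hc ord_max.
under eq_bigr do rewrite pt_max.
under [in RHS]eq_bigr do rewrite pt_max mulrnz.
rewrite !sumz => -[] E.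
set B := (4 * kk d)%N in E.
have dB : (2 ^ d < B)%N by rewrite /B /kk; have := @two_le d hd; lia.
have cv : forall F : {ffun 'I_d -> bool} -> nat,
    (\sum_(x in {ffun 'I_d -> bool} | P x) F x)%N = (\sum_x (if P x then F x else 0))%N.
  by move=> F; rewrite big_mkcond; apply: eq_bigr => x _; rewrite inE.
rewrite !cv in E.
have := @digits_fin _ ex B (fun x => if P x then mu (pt x) else 0)%N
  (fun x => if P x then 1 else 0)%N (@ex_inj d) (leq_ltn_trans (leq0n _) dB).
move=> /(_ _ _ _) D.
have B0 : (0 < B)%N by apply: leq_ltn_trans (leq0n _) dB.
have {}D : forall x, P x -> mu (pt x) = 1%N.
  move=> x Px; have := D _ _ _ x; rewrite /= Px; apply.
  - by move=> y; case: ifP => Py //; exact: leq_ltn_trans (bound y Py) dB.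
  - by move=> y; case: ifP => Py //; apply: leq_ltn_trans dB; rewrite expn_gt0.
  etransitivity; [|etransitivity; [exact: (esym E)|]].
    by apply: eq_bigr => y _; case: ifP => _; rewrite ?mul0n // mulnC.
  by apply: eq_bigr => y _; case: ifP => _; rewrite ?mul0n ?mul1n.
by move=> a /mem_Xnz [x Px ->]; exact: D.
Qed.

Lemma toR_inj (R : realType) n : injective (@toR R n).
Proof.
move=> a b E; apply/matrixP => i j.
have := congr1 (fun M : 'rV[R]_n => M i j) E; rewrite /toR !mxE; exact: intr_inj.
Qed.

Lemma part1 (R : realType) d (y : 'rV[int]_(d.+1)) :
  in_conv (map (@toR R _) (Xs d)) (toR R y) <-> y \in Xs d.
Proof.
split; last first.
  move=> Hy.
  have Hm : (index y (Xs d) < size (map (@toR R _) (Xs d)))%N by rewrite size_map index_mem.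
  pose i0 := Ordinal Hm.
  exists (fun i => (i == i0)%:R); split; first by move=> i; rewrite ler0n.
  split.
    by rewrite (bigD1 i0) //= eqxx big1 ?addr0 // => i /negbTE ->.
  rewrite (bigD1 i0) //= eqxx scale1r big1 ?addr0; last first.
    by move=> i /negbTE ->; rewrite scale0r.
  by rewrite (nth_map 0) ?index_mem // nth_index.
case=> lam [H0 [H1 Hy]].
have HA : forall i : 'I_(size (map (@toR R _) (Xs d))),
    nth 0 (map (@toR R _) (Xs d)) i = toR R (nth 0 (Xs d) i).
  by move=> i; rewrite (nth_map 0) // -(size_map (@toR R _)).
have Amem : forall i : 'I_(size (map (@toR R _) (Xs d))), nth 0 (Xs d) i \in Xs d.
  by move=> i; apply: mem_nth; rewrite -(size_map (@toR R _)).
have Hcoord : forall j, (y 0 j)%:~R = \sum_i lam i * (nth 0 (Xs d) i 0 j)%:~R :> R.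
  move=> j; have := congr1 (fun M : 'rV[R]_d.+1 => M 0 j) Hy.
  rewrite /= {1}/toR mxE summxE => ->; apply: eq_bigr => i _.
  by rewrite HA /toR !mxE.
have [m Hm] : exists m, lam m != 0.
  apply/existsP; apply: contraT => /existsPn Hz.
  move: H1; rewrite big1; first by move/eqP; rewrite eq_sym oner_eq0.
  by move=> i _; apply/eqP; move: (Hz i); rewrite negbK.
have agree : forall i, lam i != 0 -> forall t,
    nth 0 (Xs d) i 0 (lift ord_max t) = y 0 (lift ord_max t).
  move=> i Hi t; set j := lift ord_max t.
  have a01 : forall i' : 'I_(size (map (@toR R _) (Xs d))), nth 0 (Xs d) i' 0 j = 0 \/ nth 0 (Xs d) i' 0 j = 1.
    by move=> i'; exact: (@Xs_coord d _ t (Amem i')).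
  have yge : 0 <= (y 0 j)%:~R :> R.
    rewrite Hcoord; apply: sumr_ge0 => i' _; apply: mulr_ge0 => //.
    by case: (a01 i') => ->.
  have yle : (y 0 j)%:~R <= 1 :> R.
    rewrite Hcoord -[X in _ <= X]H1; apply: ler_sum => i' _.
    by case: (a01 i') => ->; rewrite ?mulr0z ?mulr1z ?mulr0 ?mulr1.
  rewrite ler0z in yge; rewrite lerz1 in yle.
  have y01 : y 0 j = 0 \/ y 0 j = 1 by lia.
  case: (a01 i) => Ha; case: y01 => Hyj; rewrite ?Ha ?Hyj //; exfalso.
  - have E : \sum_i' lam i' * (1 - (nth 0 (Xs d) i' 0 j)%:~R) = 0 :> R.
      rewrite (eq_bigr (fun i' => lam i' - lam i' * (nth 0 (Xs d) i' 0 j)%:~R)); last first.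
        by move=> i' _; rewrite mulrBr mulr1.
      by rewrite sumrB -Hcoord H1 Hyj mulr1z subrr.
    have nn : forall i' : 'I_(size (map (@toR R _) (Xs d))), true ->
        0 <= lam i' * (1 - (nth 0 (Xs d) i' 0 j)%:~R).
      move=> i' _; apply: mulr_ge0 => //; rewrite subr_ge0.
      by case: (a01 i') => ->; rewrite ?mulr0z ?mulr1z.
    have := psumr_eq0P nn E (i:=i) isT; rewrite Ha mulr0z subr0 mulr1.
    by move=> Hz; move: Hi; rewrite Hz eqxx.
  - have := Hcoord j; rewrite Hyj /= => /esym E.
    have nn : forall i' : 'I_(size (map (@toR R _) (Xs d))), true ->
        0 <= lam i' * (nth 0 (Xs d) i' 0 j)%:~R.
      move=> i' _; apply: mulr_ge0 => //; by case: (a01 i') => ->.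
    have := psumr_eq0P nn E (i:=i) isT; rewrite Ha mulr1z mulr1.
    by move=> Hz; move: Hi; rewrite Hz eqxx.
have same : forall i, lam i != 0 -> nth 0 (Xs d) i = nth 0 (Xs d) m.
  move=> i Hi; apply: Xs_inj; rewrite ?Amem // => t.
  by rewrite (agree i Hi) (agree m Hm).
suff -> : y = nth 0 (Xs d) m by exact: Amem.
apply: (@toR_inj R); rewrite Hy.
rewrite (eq_bigr (fun i => lam i *: toR R (nth 0 (Xs d) m))); last first.
  move=> i _; rewrite HA; have [->|Hi] := eqVneq (lam i) 0; first by rewrite !scale0r.
  by rewrite same.
by rewrite -scaler_suml H1 scale1r.
Qed.

Theorem mainTheorem3 (R : realType) (d : nat) (hd : (1 <= d)%N) :
  (forall y : 'rV[int]_(d.+1),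
      in_conv (map (@toR R _) (Xs d)) (toR R y) <-> y \in Xs d) /\
  (forall mu : 'rV[int]_(d.+1) -> nat,
      tt_ d = \sum_(a <- Xnz d) a *+ mu a ->
      forall a, a \in Xnz d -> mu a = 1%N).
Proof.
split; first by move=> y; exact: part1.
by move=> mu; exact: part2.
Qed.
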